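(* A tensor norm $\beta$ is smooth if and only if the multi-ideal $\mathcal{L}_\beta$ has property [B].
   Context: All spaces are over a fixed field $\mathbb{K}=\mathbb{R}$ or $\mathbb{C}$. $\mathcal{L}(E_1,\ldots,E_n;F)$ is the space of continuous $n$-linear maps with the sup norm, and $E'$ is the dual of $E$. An $n$-tensor norm $\beta_n$ assigns to every $n$-tuple of normed spaces $E_1,\ldots,E_n$ a norm $\beta_n$ on $E_1\otimes\cdots\otimes E_n$. This norm must be a reasonable crossnorm ($\varepsilon_n\le\beta_n\le\pi_n$, injective and projective norms) and satisfy the metric mapping property $\beta_n((u_1\otimes\cdots\otimes u_n)(z))\le\|u_1\|\cdots\|u_n\|\beta_n(z)$. A tensor norm is a sequence $\beta=(\beta_n)_{n\ge1}$ of $n$-tensor norms. $\beta$ is smooth if for every $n$ and all normed $E_1,\ldots,E_n$ the map $\psi\colon(E_1\otimes\cdots\otimes E_n\otimes\mathbb{K},\beta_{n+1})\to(E_1\otimes\cdots\otimes E_n,\beta_n)$, $\psi(x_1\otimes\cdots\otimes x_n\otimes\lambda)=\lambda(x_1\otimes\cdots\otimes x_n)$, is an isometric isomorphism. For a tensor norm $\beta$, $\mathcal{L}_\beta(E_1,\ldots,E_n;F)$ is the set of $A\in\mathcal{L}(E_1,\ldots,E_n;F)$ whose linearization $A_L\colon(E_1\otimes\cdots\otimes E_n,\beta_n)\to F$, $A_L(x_1\otimes\cdots\otimes x_n)=A(x_1,\ldots,x_n)$, is continuous. It carries the norm $\|A\|_{\mathcal{L}_\beta}=\|A_L\|$. For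 $A\in\mathcal{L}(E_1,\ldots,E_n,\mathbb{K};F)$ let $A1\in\mathcal{L}(E_1,\ldots,E_n;F)$ be $A1(x_1,\ldots,x_n)=A(x_1,\ldots,x_n,1)$. A multi-ideal $\mathcal M$ has property [B] if, for every $n$, all Banach spaces $E_1,\ldots,E_n,F$ and every $A\in\mathcal{L}(E_1,\ldots,E_n,\mathbb{K};F)$, we have $A\in\mathcal{M}(E_1,\ldots,E_n,\mathbb{K};F)\iff A1\in\mathcal{M}(E_1,\ldots,E_n;F)$, and in this case $\|A\|_{\mathcal M}=\|A1\|_{\mathcal M}$. (In the statement the property is applied with $F$ ranging over normed tensor products.) *)

(* Defs.v *)
From HB Require Import structures.
From mathcomp Require Import all_boot all_order all_algebra.
From mathcomp Require Import all_classical all_reals topology normedtype.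
From mathcomp Require Import complex.
Set Implicit Arguments. Unset Strict Implicit. Unset Printing Implicit Defensive.
Import Order.TTheory GRing.Theory Num.Theory.
Import numFieldNormedType.Exports.
Local Open Scope ring_scope.

Definition scalar_field (R : realType) (b : bool) : numFieldType :=
  if b then (R : numFieldType) else (R[i] : numFieldType).

Section TensorNorms.
Variable K : numFieldType.

(* Algebraic tensor product E_0 (x) ... (x) E_{n-1}, modelled concretely   *)
(* as the span, inside the functions  (prod_i E_i^* ) -> K  (E_i^* the     *)
(* algebraic dual), of the elementary tensors                              *)
(*     x_0 (x) ... (x) x_{n-1} : phi |-> prod_i phi_i (x_i).               *)
(* (This is the standard injective realisation of the algebraic tensor     *)
(* product.)                                                              *)

Definition dualp n (E : 'I_n -> normedModType K) :=
  forall i : 'I_n, {linear E i -> K^o}.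

Definition elem n (E : 'I_n -> normedModType K) (x : forall i, E i)
  : dualp E -> K := fun phi => \prod_(i < n) phi i (x i).

Definition tsum n (E : 'I_n -> normedModType K) (s : seq (K * (forall i, E i)))
  : dualp E -> K := fun phi => \sum_(p <- s) p.1 * elem p.2 phi.

Definition is_tensor n (E : 'I_n -> normedModType K) (z : dualp E -> K) : Prop :=
  exists s, z = tsum s.

(* (u_0 (x) ... (x) u_{n-1})(z) *)
Definition tmap n (E F : 'I_n -> normedModType K)
  (u : forall i, {linear E i -> F i}) (z : dualp E -> K) : dualp F -> K :=
  fun psi => z (fun i => (psi i \o u i : {linear E i -> K^o})).

(* Tensor norms.  beta n E is the (n+1)-tensor norm on                     *)
(* E_0 (x) ... (x) E_n (indices shifted so that n+1 >= 1).                 *)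

Definition raw_tnorm := forall n (E : 'I_n.+1 -> normedModType K), (dualp E -> K) -> K.

Definition is_tensor_norm (beta : raw_tnorm) : Prop :=
  forall n (E : 'I_n.+1 -> normedModType K),
      (forall z w, is_tensor z -> is_tensor w ->
         beta n E (fun phi => z phi + w phi) <= beta n E z + beta n E w) /\
      (forall (c : K) z, is_tensor z ->
         beta n E (fun phi => c * z phi) = `|c| * beta n E z) /\
      (forall z, is_tensor z -> beta n E z = 0 -> z = fun _ => 0) /\
      (* eps_n <= beta_n : |z(phi)| <= beta(z) for phi_i in the dual unit balls *)
      (forall z, is_tensor z -> forall phi : dualp E,
         (forall i (x : E i), `|phi i x| <= `|x|) -> `|z phi| <= beta n E z) /\
      (* beta_n <= pi_n : beta(z) <= sum_k |c_k| prod_i ||x^k_i|| for every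
         representation z = sum_k c_k x^k_0 (x) ... (x) x^k_n *)
      (forall s, beta n E (tsum s) <= \sum_(p <- s) `|p.1| * \prod_(i < n.+1) `|p.2 i|) /\
      (forall (F : 'I_n.+1 -> normedModType K) (u : forall i, {linear E i -> F i})
              (c : 'I_n.+1 -> K),
         (forall i, 0 <= c i) -> (forall i (x : E i), `|u i x| <= c i * `|x|) ->
         forall z, is_tensor z -> beta n F (tmap u z) <= (\prod_(i < n.+1) c i) * beta n E z).

Record tensor_norm := TensorNorm {
  tn : raw_tnorm ;
  tnP : is_tensor_norm tn }.
Arguments tn : clear implicits.
Arguments tn t n E _.

Definition extK_o n (E : 'I_n -> normedModType K) (o : option 'I_n)
  : normedModType K := match o with Some j => E j | None => K^o end.

Definition extK n (E : 'I_n -> normedModType K) : 'I_n.+1 -> normedModType K :=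
  fun i => extK_o E (unlift ord_max i).

Definition ext_pt n (E : 'I_n -> normedModType K) (x : forall i, E i) (lam : K)
  : forall i, extK E i :=
  fun i => match unlift ord_max i as o
                 return extK_o E o with
           | Some j => x j | None => lam end.

Definition ext_dual n (E : 'I_n -> normedModType K) (phi : dualp E)
  : dualp (extK E) :=
  fun i => match unlift ord_max i as o
                 return {linear extK_o E o -> K^o} with
           | Some j => phi j | None => (idfun : {linear K^o -> K^o}) end.

(* psi : E_0 (x) ... (x) E_n (x) K -> E_0 (x) ... (x) E_n,
   x_0 (x) ... (x) x_n (x) lam |-> lam x_0 (x) ... (x) x_n *)
Definition psi_map n (E : 'I_n -> normedModType K) (z : dualp (extK E) -> K)
  : dualp E -> K := fun phi => z (ext_dual phi).

Definition smooth (beta : tensor_norm) : Prop :=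
  forall n (E : 'I_n.+1 -> normedModType K),
  [/\ (forall z : dualp (extK E) -> K, is_tensor z -> is_tensor (psi_map z)),
      (forall z z' : dualp (extK E) -> K, is_tensor z -> is_tensor z' ->
         psi_map z = psi_map z' -> z = z'),
      (forall w : dualp E -> K, is_tensor w ->
         exists2 z : dualp (extK E) -> K, is_tensor z & psi_map z = w) &
      (forall z : dualp (extK E) -> K, is_tensor z ->
         tn beta n E (psi_map z) = tn beta n.+1 (extK E) z)].

Definition multilinear n (E : 'I_n -> normedModType K) (F : normedModType K)
  (A : (forall i, E i) -> F) : Prop :=
  forall (i : 'I_n) (x : forall j, E j),
    linear (fun y : E i => A (@dfwith _ (fun j => E j : Type) x i y)).

Definition cont_multilinear n (E : 'I_n -> normedModType K) (F : normedModType K)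
  (A : (forall i, E i) -> F) : Prop :=
  multilinear A /\ continuous (A : prod_topology E -> F).

(* C bounds the linearisation A_L : (E_0 (x) ... (x) E_n, beta) -> F, i.e.
   ||A_L z|| <= C beta(z) for every tensor z = sum_k c_k x^k_0 (x) ... (x) x^k_n,
   where A_L z = sum_k c_k A(x^k). *)
Definition lin_bound (beta : tensor_norm) n (E : 'I_n.+1 -> normedModType K)
  (F : normedModType K) (A : (forall i, E i) -> F) (C : K) : Prop :=
  forall s : seq (K * (forall i, E i)),
    `|\sum_(p <- s) p.1 *: A p.2| <= C * tn beta n E (tsum s).

Definition in_Lbeta (beta : tensor_norm) n (E : 'I_n.+1 -> normedModType K)
  (F : normedModType K) (A : (forall i, E i) -> F) : Prop :=
  cont_multilinear A /\ exists C, lin_bound beta A C.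

Definition A1 n (E : 'I_n -> normedModType K) (F : normedModType K)
  (A : (forall i, extK E i) -> F) : (forall i, E i) -> F :=
  fun x => A (ext_pt x 1).

(* Property [B] for L_beta.  ||A||_{L_beta} = ||A1||_{L_beta} is expressed
   as: A_L and (A1)_L have exactly the same bounds C. *)
Definition propB (beta : tensor_norm) : Prop :=
  forall n (E : 'I_n.+1 -> normedModType K) (F : normedModType K)
         (A : (forall i, extK E i) -> F),
    cont_multilinear A ->
    (in_Lbeta beta A <-> in_Lbeta beta (A1 A)) /\
    (in_Lbeta beta A -> forall C, lin_bound beta A C <-> lin_bound beta (A1 A) C).

End TensorNorms.

(* Main.v *)
Require Import Defs.
From HB Require Import structures.
From mathcomp Require Import all_boot all_order all_algebra.
From mathcomp Require Import all_classical all_reals topology normedtype.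
From mathcomp Require Import ring.
Set Implicit Arguments. Unset Strict Implicit. Unset Printing Implicit Defensive.
Import Order.TTheory GRing.Theory Num.Theory.
Import numFieldNormedType.Exports.
Local Open Scope ring_scope.
Unset Implicit Arguments.

Section Top.
Lemma prod_cont (X : topologicalType) (I : eqType) (T : I -> topologicalType)
  (g : X -> prod_topology T) : (forall i, continuous (fun x => g x i)) -> continuous g.
Proof.
move=> cg x; apply/cvg_sup => i.
move=> U /= [? [[W oW <-]]] /= Wgx /filterS; apply; apply: (cg i).
exact: open_nbhs_nbhs.
Qed.
End Top.

Section Casts.
Variable K : numFieldType.
Variables (n : nat) (E : 'I_n -> normedModType K).
Local Notation EO := (extK_o E).

Lemma castS_match o j (e : o = Some j) (f : forall j, E j) (c : K) :
  ecast o' (EO o') e (match o as o' return EO o' with Some j => f j | None => c end) = f j.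
Proof. by move: e; case: o => [j'|] e //; case: (e) => ej; subst j'; rewrite (eq_irrelevance e erefl). Qed.

Lemma castN_match o (e : o = None) (f : forall j, E j) (c : K) :
  ecast o' (EO o') e (match o as o' return EO o' with Some j => f j | None => c end) = c.
Proof. by move: e; case: o => [j'|] e //; rewrite (eq_irrelevance e erefl). Qed.

Lemma cast_inj o o' (e : o = o') (u v : EO o) : ecast o (EO o) e u = ecast o (EO o) e v -> u = v.
Proof. by case: o' / e. Qed.

End Casts.

Section Ext.
Variable K : numFieldType.
Variables (n : nat) (E : 'I_n -> normedModType K).
Local Notation EO := (extK_o E).

Definition restr (x : forall i, extK E i) : forall j, E j :=
  fun j => ecast o (EO o) (liftK ord_max j) (x (lift ord_max j)).
Definition lastv (x : forall i, extK E i) : K :=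
  ecast o (EO o) (unlift_none ord_max) (x ord_max).

Lemma restr_ext x l : restr (ext_pt x l) = x.
Proof. by apply: functional_extensionality_dep => j; rewrite /restr castS_match. Qed.

Lemma lastv_ext x l : lastv (ext_pt x l) = l.
Proof. by rewrite /lastv castN_match. Qed.

Lemma match_castS o j (e : o = Some j) (v : EO o) (F : forall j, E j) (c : K) :
  F j = ecast o (EO o) e v ->
  (match o as o' return EO o' with Some j => F j | None => c end) = v.
Proof. by move: e v; case: o => [j'|] e v //; case: (e) => ej; subst j'; rewrite (eq_irrelevance e erefl). Qed.

Lemma match_castN o (e : o = None) (v : EO o) (F : forall j, E j) (c : K) :
  c = ecast o (EO o) e v ->
  (match o as o' return EO o' with Some j => F j | None => c end) = v.
Proof. by move: e v; case: o => [j'|] e v //; rewrite (eq_irrelevance e erefl). Qed.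

Lemma unlift_cases (i : 'I_n.+1) : (exists j, i = lift ord_max j) \/ i = ord_max.
Proof. by case: (unliftP ord_max i) => [j ->|->]; [left; exists j|right]. Qed.

Lemma ext_restr x : ext_pt (restr x) (lastv x) = x.
Proof.
apply: functional_extensionality_dep => i.
case: (unlift_cases i) => [[j ->]|->].
  exact: (match_castS _ _ (liftK ord_max j) (x (lift ord_max j)) (restr x) (lastv x) erefl).
exact: (match_castN _ (unlift_none ord_max) (x ord_max) (restr x) (lastv x) erefl).
Qed.

Lemma dualS o j (e : o = Some j) (phi : dualp E) (v : EO o) :
  (match o as o' return {linear EO o' -> K^o} with Some j => phi j
     | None => (idfun : {linear K^o -> K^o}) end) v = phi j (ecast o (EO o) e v).
Proof. by move: e v; case: o => [j'|] e v //; case: (e) => ej; subst j'; rewrite (eq_irrelevance e erefl). Qed.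

Lemma dualN o (e : o = None) (phi : dualp E) (v : EO o) :
  (match o as o' return {linear EO o' -> K^o} with Some j => phi j
     | None => (idfun : {linear K^o -> K^o}) end) v = ecast o (EO o) e v.
Proof. by move: e v; case: o => [j'|] e v //; rewrite (eq_irrelevance e erefl). Qed.

Lemma elem_ext_dual (x : forall i, extK E i) (phi : dualp E) :
  elem x (ext_dual phi) = lastv x * elem (restr x) phi.
Proof.
rewrite /elem (bigD1_ord ord_max) //=; congr (_ * _).
  exact: (dualN _ (unlift_none ord_max)).
by apply: eq_bigr => j _; exact: (dualS _ _ (liftK ord_max j)).
Qed.

Definition restr_dual (Phi : dualp (extK E)) : dualp E :=
  fun j => ecast o ({linear EO o -> K^o}) (liftK ord_max j) (Phi (lift ord_max j)).

Lemma linS o j (e : o = Some j) (L : {linear EO o -> K^o}) (v : EO o) :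
  L v = (ecast o ({linear EO o -> K^o}) e L) (ecast o (EO o) e v).
Proof. by case: _ / e. Qed.

Lemma linN o (e : o = None) (L : {linear EO o -> K^o}) (v : EO o) :
  L v = ecast o (EO o) e v * L (ecast o (EO o) (esym e) (1 : K)).
Proof.
move: e L v; case: o => [j|] e L v //; rewrite (eq_irrelevance e erefl) /=.
by rewrite -[in LHS](mulr1 v) -[v * 1]/(v *: (1 : K^o)) linearZ.
Qed.

Definition mu (Phi : dualp (extK E)) : K :=
  Phi ord_max (ecast o (EO o) (esym (unlift_none ord_max)) (1 : K)).

Lemma elem_general (x : forall i, extK E i) (Phi : dualp (extK E)) :
  elem x Phi = mu Phi * (lastv x * elem (restr x) (restr_dual Phi)).
Proof.
rewrite /elem (bigD1_ord ord_max) //= mulrA; congr (_ * _).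
  by rewrite (linN _ (unlift_none ord_max)) mulrC.
by apply: eq_bigr => j _; exact: (linS _ _ (liftK ord_max j)).
Qed.

End Ext.


Section Tsum.
Variable K : numFieldType.
Variables (m : nat) (G : 'I_m -> normedModType K).

Lemma tsum_cat (s t : seq (K * (forall i, G i))) :
  tsum (s ++ t) = tsum s \+ tsum t.
Proof. by apply: funext => phi; rewrite /tsum big_cat. Qed.

Definition sc (a : K) (s : seq (K * (forall i, G i))) := [seq (a * p.1, p.2) | p <- s].

Lemma tsum_sc a s : tsum (sc a s) = fun phi => a * tsum s phi.
Proof.
apply: funext => phi; rewrite /tsum /sc big_map mulr_sumr.
by apply: eq_bigr => p _; rewrite mulrA.
Qed.

Lemma tsum_nil : tsum ([::] : seq (K * (forall i, G i))) = fun _ => 0.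
Proof. by apply: funext => phi; rewrite /tsum big_nil. Qed.

Definition tpred : {pred dualp G -> K} := fun z => `[< is_tensor z >].

Lemma tpred_submod : GRing.submod_closed tpred.
Proof.
split.
  by apply/asboolP; exists [::]; rewrite tsum_nil.
move=> a u v /asboolP [s ->] /asboolP [t ->]; apply/asboolP.
exists (sc a s ++ t); rewrite tsum_cat tsum_sc.
by apply: funext => phi.
Qed.

HB.instance Definition _ := GRing.isSubmodClosed.Build K (dualp G -> K) tpred tpred_submod.

Record tens := Tens { tval : dualp G -> K ; tvalP : tpred tval }.
HB.instance Definition _ := [isSub for tval].
HB.instance Definition _ := [Choice of tens by <:].
HB.instance Definition _ := [SubChoice_isSubLmodule of tens by <:].

Lemma tvalD (u v : tens) : tval (u + v) = tval u + tval v.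
Proof. exact: (raddfD (val : tens -> dualp G -> K)). Qed.
Lemma tvalZ a (u : tens) : tval (a *: u) = a *: tval u.
Proof. by []. Qed.
Lemma tval0 : tval 0 = 0.
Proof. exact: (raddf0 (val : tens -> dualp G -> K)). Qed.

Lemma tsum_cons (p : K * (forall i, G i)) s : tsum (p :: s) = fun phi => p.1 * elem p.2 phi + tsum s phi.
Proof. by apply: funext => phi; rewrite /tsum big_cons. Qed.

Definition Telem (x : forall i, G i) : tens :=
  Tens (tsum [:: ((1 : K), x)]) (@asboolT _ (ex_intro _ [:: ((1 : K), x)] erefl)).

Lemma tval_sum (s : seq (K * (forall i, G i))) : tval (\sum_(p <- s) p.1 *: Telem p.2) = tsum s.
Proof.
elim: s => [|p s IH].
  by rewrite big_nil tsum_nil tval0.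
rewrite big_cons tvalD tvalZ IH tsum_cons.
apply: funext => phi /=; rewrite tsum_cons tsum_nil !fctE /= mul1r addr0.
by [].
Qed.
End Tsum.

Section TNorm.
Variable K : numFieldType.
Variable beta : tensor_norm K.
Variables (m : nat) (G : 'I_m.+1 -> normedModType K).
Definition tensB : Type := let _ := beta in tens K m.+1 G.
Local Notation T := tensB.
HB.instance Definition _ := GRing.Lmodule.on T.
Definition tv (u : T) : dualp G -> K := tval K m.+1 G u.

Definition tnorm (u : T) : K := @tn K beta m G (tv u).

Lemma tens_is_tensor (u : T) : is_tensor (tv u).
Proof. exact/asboolP/(tvalP K m.+1 G u). Qed.

Lemma tnorm_D (u v : T) : tnorm (u + v) <= tnorm u + tnorm v.
Proof.
rewrite /tnorm /tv tvalD; have [H _] := tnP beta G.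
exact: (H _ _ (tens_is_tensor u) (tens_is_tensor v)).
Qed.

Lemma tnorm_Z a (u : T) : tnorm (a *: u) = `|a| * tnorm u.
Proof.
rewrite /tnorm /tv tvalZ; have [_ [H _]] := tnP beta G.
exact: (H _ _ (tens_is_tensor u)).
Qed.

Lemma tnorm_eq0 (u : T) : tnorm u = 0 -> u = 0.
Proof.
rewrite /tnorm; have [_ [_ [H _]]] := tnP beta G.
move/(H _ (tens_is_tensor u)) => h; apply: val_inj.
by rewrite [val u]h; exact: (esym (tval0 K m.+1 G)).
Qed.

HB.instance Definition _ := Lmodule_isNormed.Build K (T) tnorm_D tnorm_Z tnorm_eq0.

Lemma tens_normE (u : T) : `|u| = @tn K beta m G (tv u).
Proof. by []. Qed.

End TNorm.


Local Open Scope classical_set_scope.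

Section Cont.
Variable K : numFieldType.
Variables (m : nat) (G : 'I_m -> normedModType K) (F : normedModType K).

Lemma slot_diff (M : (forall i, G i) -> F) : multilinear M ->
  forall z (i : 'I_m) (a b : G i),
  M (dfwith z i a) - M (dfwith z i b) = M (dfwith z i (a - b)).
Proof.
move=> ML z i a b; have L := ML i z.
have add u v : M (dfwith z i (u + v)) = M (dfwith z i u) + M (dfwith z i v).
  by have := L 1 u v; rewrite !scale1r.
have {1}-> : a = (a - b) + b by rewrite subrK.
by rewrite add addrK.
Qed.

Lemma ml_continuous (M : (forall i, G i) -> F) (C : K) : 0 <= C ->
  multilinear M -> (forall x, `|M x| <= C * \prod_(i < m) `|x i|) ->
  continuous (M : prod_topology G -> F).
Proof.
move=> C0 ML Mb x0.
have FF : ProperFilter (nbhs (x0 : prod_topology G)) by exact: nbhs_pfilter.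
apply/cvgrPdist_le => e e0.
pose P := \prod_(i < m) (`|x0 i| + 1).
have P0 : 0 < P by apply: prodr_gt0 => i _; rewrite ltr_pwDr.
pose D := (m%:R + 1) * (C + 1) * P.
have D0 : 0 < D by rewrite !mulr_gt0 // ltr_pwDr.
pose r := e / D.
have r0 : 0 < r by rewrite divr_gt0.
have r10 : 0 < 1 + r by rewrite addr_gt0.
pose d := r / (1 + r).
have d0 : 0 < d by rewrite divr_gt0.
have d1 : d <= 1 by rewrite ler_pdivrMr // mul1r lerDr ltW.
have deD : d <= e / D.
  rewrite ler_pdivrMr // -/r; apply: ler_peMr; [exact: ltW | by rewrite lerDl ltW].
have near_all : \forall x \near (x0 : prod_topology G), forall i, `|x0 i - x i| < d.
  apply: (@filter_forall _ _ (fun i x => `|x0 i - x i| < d) _ FF) => i.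
  by have /cvgrPdist_lt /(_ d d0) := @proj_continuous _ G i x0.
apply: filterS near_all => x H.
pose z (k : nat) : forall i, G i := fun i => if (i < k)%N then x i else x0 i.
have z0 : z 0%N = x0 by apply: functional_extensionality_dep => i.
have zm : z m = x by apply: functional_extensionality_dep => i; rewrite /z ltn_ord.
have tele : M x - M x0 = \sum_(k < m) (M (z k.+1) - M (z k)).
  rewrite -(big_mkord xpredT (fun k => M (z k.+1) - M (z k))).
  by rewrite (telescope_sumr (fun k => M (z k))) // zm z0.
have step (k : 'I_m) : M (z k.+1) - M (z k) = M (dfwith (z k) k (x k - x0 k)).
  have e1 : z k.+1 = dfwith (z k) k (x k).
    apply: functional_extensionality_dep => j; have [<-|kj] := eqVneq k j.
      by rewrite dfwithin /z ltnSn.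
    rewrite dfwithout // /z ltnS leq_eqVlt.
    by have -> : (val j == val k) = false by apply/negbTE; rewrite eq_sym.
  have e2 : z k = dfwith (z k) k (x0 k).
    apply: functional_extensionality_dep => j; have [<-|kj] := eqVneq k j.
      by rewrite dfwithin /z ltnn.
    by rewrite dfwithout.
  by rewrite {1}e1 {2}e2 slot_diff.
have bnd (k : 'I_m) : `|M (dfwith (z k) k (x k - x0 k))| <= C * (d * P).
  apply: le_trans (Mb _) _.
  apply: ler_wpM2l => //.
  have -> : d * P = \prod_(i < m) ((if i == k then d else 1) * (`|x0 i| + 1)).
    rewrite big_split /=; congr (_ * _).
    rewrite (bigD1 k) //= eqxx big1 ?mulr1 // => i /negbTE ->. by [].
  apply: ler_prod => i _; rewrite normr_ge0 /=.
  have [<-|ki] := eqVneq k i.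
    rewrite dfwithin ?eqxx distrC.
    apply: le_trans (ltW (H k)) _; apply: ler_peMr; [exact: ltW | by rewrite lerDr].
  rewrite dfwithout // mul1r.
  have hx : `|x i| <= `|x0 i| + 1.
    have -> : x i = x0 i + (x i - x0 i) by rewrite addrC subrK.
    apply: le_trans (ler_normD _ _) _; rewrite lerD2l distrC.
    exact: le_trans (ltW (H i)) d1.
  rewrite /z; case: ifP => _; [exact: hx | by rewrite lerDl].
rewrite distrC tele.
apply: le_trans (ler_norm_sum _ _ _) _.
apply: le_trans (_ : \sum_(k < m) `|M (z k.+1) - M (z k)| <= \sum_(k < m) C * (d * P)) _.
  by apply: ler_sum => k _; rewrite step; exact: bnd.
rewrite sumr_const card_ord.
apply: le_trans (_ : D * d <= _).
  have -> : C * (d * P) *+ m = (m%:R * C * P) * d by rewrite -mulr_natl; ring.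
  rewrite /D; apply: ler_wpM2r; first exact: ltW.
  apply: ler_wpM2r; first exact: ltW.
  by apply: ler_pM; rewrite ?ler0n ?lerDl.
by rewrite -ler_pdivlMl // mulrC.
Qed.
End Cont.


Local Open Scope classical_set_scope.

Section Ext2.
Variable K : numFieldType.
Variables (n : nat) (E : 'I_n -> normedModType K).
Local Notation EO := (extK_o E).
Local Notation dfw := (@dfwith _ (fun j => extK E j : Type)).
Local Notation dfE := (@dfwith _ (fun j => E j : Type)).

Lemma ext_eq (u v : forall i, extK E i) :
  restr K n E u = restr K n E v -> lastv K n E u = lastv K n E v -> u = v.
Proof. by move=> h1 h2; rewrite -(ext_restr K n E u) -(ext_restr K n E v) h1 h2. Qed.

Lemma castK o o' (e : o = o') (y : EO o') : ecast o (EO o) e (ecast o (EO o) (esym e) y) = y.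
Proof. by case: o' / e in y *. Qed.

Lemma castZ o o' (e : o = o') (a : K) (v : EO o) :
  ecast o (EO o) e (a *: v) = a *: ecast o (EO o) e v.
Proof. by case: o' / e. Qed.

Lemma castD o o' (e : o = o') (u v : EO o) :
  ecast o (EO o) e (u + v) = ecast o (EO o) e u + ecast o (EO o) e v.
Proof. by case: o' / e. Qed.

Lemma restr_dfS w i v : restr K n E (dfw w (lift ord_max i) v) =
  dfE (restr K n E w) i (ecast o (EO o) (liftK ord_max i) v).
Proof.
apply: functional_extensionality_dep => j; rewrite /restr.
have [<-|ij] := eqVneq i j; first by rewrite !dfwithin.
rewrite !dfwithout //.
by apply: contra ij => /eqP /lift_inj ->.
Qed.

Lemma lastv_dfS w i v : lastv K n E (dfw w (lift ord_max i) v) = lastv K n E w.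
Proof. by rewrite /lastv dfwithout // eq_sym neq_lift. Qed.

Lemma restr_dfN w v : restr K n E (dfw w ord_max v) = restr K n E w.
Proof.
apply: functional_extensionality_dep => j; rewrite /restr dfwithout //.
exact: neq_lift.
Qed.

Lemma lastv_dfN w v : lastv K n E (dfw w ord_max v) = ecast o (EO o) (unlift_none ord_max) v.
Proof. by rewrite /lastv dfwithin. Qed.

Definition fromK (l : K) : extK E ord_max := ecast o (EO o) (esym (unlift_none ord_max)) l.

Lemma homog_pt (y : forall j, E j) (l : K) :
  ext_pt y l = dfw (ext_pt y 1) ord_max (fromK l).
Proof.
apply: ext_eq.
  by rewrite restr_dfN !restr_ext.
by rewrite lastv_dfN lastv_ext /fromK castK.
Qed.

Lemma ml_homog (F : normedModType K) (A : (forall i, extK E i) -> F) :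
  multilinear A -> forall x, A x = lastv K n E x *: A (ext_pt (restr K n E x) 1).
Proof.
move=> ML x; rewrite -{1}(ext_restr K n E x).
set y := restr K n E x; set l := lastv K n E x.
have L := ML ord_max (ext_pt y 1).
have f0 : A (dfw (ext_pt y 1) ord_max 0) = 0.
  have h := L 1 0 0; rewrite /= !scale1r addr0 in h.
  by apply: (addrI (A (dfw (ext_pt y 1) ord_max 0))); rewrite addr0 -h.
have -> : ext_pt y 1 = dfw (ext_pt y 1) ord_max (fromK 1).
  by rewrite -homog_pt.
rewrite homog_pt.
have -> : fromK l = l *: fromK 1 + 0.
  by rewrite addr0 /fromK -castZ /= [l *: _]mulr1.
by rewrite L f0 addr0.
Qed.

Lemma A1_pt (y : forall j, E j) i (v : E i) :
  ext_pt (dfE y i v) 1 = dfw (ext_pt y 1) (lift ord_max i)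
     (ecast o (EO o) (esym (liftK ord_max i)) v).
Proof.
apply: ext_eq.
  by rewrite restr_dfS !restr_ext castK.
by rewrite lastv_dfS !lastv_ext.
Qed.

Lemma ext_match_cont o :
  continuous (fun x : prod_topology E =>
     match o as o' return EO o' with Some j => x j | None => (1 : K) end).
Proof. case: o => [j|]; [exact: proj_continuous | exact: cst_continuous]. Qed.

Lemma ext_pt_cont : continuous (fun x : prod_topology E => (ext_pt x 1 : prod_topology (extK E))).
Proof. by apply: prod_cont => i; exact: ext_match_cont. Qed.

Lemma A1_cml (F : normedModType K) (A : (forall i, extK E i) -> F) :
  cont_multilinear A -> cont_multilinear (A1 A).
Proof.
case=> ML cA; split.
  move=> i y a u v; rewrite /A1 !A1_pt.
  rewrite (_ : ecast o (EO o) (esym (liftK ord_max i)) (a *: u + v) =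
     a *: ecast o (EO o) (esym (liftK ord_max i)) u + ecast o (EO o) (esym (liftK ord_max i)) v).
    exact: ML.
  by rewrite castD castZ.
move=> x; exact: (continuous_comp (ext_pt_cont x) (cA (ext_pt x 1))).
Qed.

End Ext2.

Section Psi.
Variable K : numFieldType.
Variables (n : nat) (E : 'I_n -> normedModType K).

Lemma psi_ext (s : seq (K * (forall i, E i))) :
  psi_map (tsum [seq (p.1, ext_pt p.2 1) | p <- s]) = tsum s.
Proof.
apply: funext => phi; rewrite /psi_map /tsum big_map; apply: eq_bigr => p _.
by rewrite /= elem_ext_dual lastv_ext restr_ext mul1r.
Qed.

Lemma psi_gen (s : seq (K * (forall i, extK E i))) :
  psi_map (tsum s) = tsum [seq (p.1 * lastv K n E p.2, restr K n E p.2) | p <- s].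
Proof.
apply: funext => phi; rewrite /psi_map /tsum big_map; apply: eq_bigr => p _.
by rewrite /= elem_ext_dual mulrA.
Qed.
End Psi.

Section DirI.
Variable K : numFieldType.
Variable beta : tensor_norm K.

Lemma dirI : smooth beta -> propB beta.
Proof.
move=> Hs n E F A cmA.
have [_ _ _ Hn] := Hs n E.
have key : forall C, lin_bound beta A C <-> lin_bound beta (A1 A) C.
  move=> C; split => hb s.
    have := hb [seq (p.1, ext_pt p.2 1) | p <- s].
    rewrite big_map -Hn ?psi_ext //.
    by eexists.
  have := hb [seq (p.1 * lastv K n.+1 E p.2, restr K n.+1 E p.2) | p <- s].
  rewrite big_map -psi_gen Hn; last by eexists.
  congr (_ <= _); congr (`|_|); apply: eq_bigr => p _ /=.
  by rewrite -scalerA -ml_homog //; case: cmA.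
split.
  split; case=> cm [C hC]; split.
  - exact: A1_cml.
  - by exists C; apply/key.
  - exact: cmA.
  - by exists C; apply/key.
by move=> _ C; exact: key.
Qed.
End DirI.


Local Open Scope classical_set_scope.

Section ElemSlot.
Variable K : numFieldType.
Variables (m : nat) (G : 'I_m -> normedModType K).
Local Notation dfE := (@dfwith _ (fun j => G j : Type)).

Lemma elem_split (x : forall i, G i) (phi : dualp G) j :
  elem x phi = phi j (x j) * \prod_(i < m | i != j) phi i (x i).
Proof. by rewrite /elem (bigD1 j). Qed.

Lemma elem_slot (y : forall i, G i) j (a : K) (u v : G j) (phi : dualp G) :
  elem (dfE y j (a *: u + v)) phi = a * elem (dfE y j u) phi + elem (dfE y j v) phi.
Proof.
have hr w : \prod_(i < m | i != j) phi i (dfE y j w i) = \prod_(i < m | i != j) phi i (y i).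
  by apply: eq_bigr => i ij; rewrite dfwithout // eq_sym.
rewrite !(elem_split _ _ j) !hr !dfwithin linearP mulrDl mulrA.
by [].
Qed.
End ElemSlot.


Section TE.
Variable K : numFieldType.
Variables (m : nat) (G : 'I_m -> normedModType K).
Lemma tval_Telem (x : forall i, G i) : tval K m G (Telem K m G x) = elem x.
Proof.
apply: funext => phi; rewrite /Telem /=.
by rewrite tsum_cons tsum_nil /= mul1r addr0.
Qed.
End TE.

Section TB.
Variable K : numFieldType.
Variable beta : tensor_norm K.
Variables (m : nat) (G : 'I_m.+1 -> normedModType K).
Local Notation T := (tensB K beta m G).
Local Notation dfE := (@dfwith _ (fun j => G j : Type)).

Definition TelemB (y : forall i, G i) : T := Telem K m.+1 G y.

Lemma tvB_sum (s : seq (K * (forall i, G i))) :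
  tv K beta m G (\sum_(p <- s) p.1 *: TelemB p.2) = tsum s.
Proof. exact: tval_sum. Qed.

Lemma normB_sum (s : seq (K * (forall i, G i))) :
  `|\sum_(p <- s) p.1 *: TelemB p.2| = tn beta (tsum s).
Proof. by rewrite tens_normE tvB_sum. Qed.

Lemma TelemB_norm y : `|TelemB y| <= \prod_(i < m.+1) `|y i|.
Proof.
have [_ [_ [_ [_ [H _]]]]] := tnP beta G.
have := H [:: ((1 : K), y)]; rewrite big_cons big_nil normr1 mul1r addr0.
by rewrite tens_normE.
Qed.
End TB.

Section TB2.
Variable K : numFieldType.
Variable beta : tensor_norm K.
Variables (m : nat) (G : 'I_m.+1 -> normedModType K).
Local Notation T := (tensB K beta m G).

Lemma TelemB_ml : multilinear (TelemB K beta m G).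
Proof.
move=> i y a u v; apply: val_inj; apply: funext => phi.
rewrite -[RHS]/(tval K m.+1 G (a *: Telem K m.+1 G (dfwith y i u) + Telem K m.+1 G (dfwith y i v)) phi).
rewrite -[LHS]/(tval K m.+1 G (Telem K m.+1 G (dfwith y i (a *: u + v))) phi).
rewrite (tvalD K m.+1 G) (tvalZ K m.+1 G) !tval_Telem !fctE.
exact: elem_slot.
Qed.

Lemma TelemB_cml : cont_multilinear (TelemB K beta m G).
Proof.
split; first exact: TelemB_ml.
apply: (ml_continuous K m.+1 G T (TelemB K beta m G) 1) => //; first exact: TelemB_ml.
by move=> y; rewrite mul1r; exact: TelemB_norm.
Qed.
End TB2.

Section Gen.
Variable K : numFieldType.
Variables (n : nat) (E : 'I_n -> normedModType K).
Local Notation EO := (extK_o E).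

Lemma tsum_general (s : seq (K * (forall i, extK E i))) (Phi : dualp (extK E)) :
  tsum s Phi = mu K n E Phi * psi_map (tsum s) (restr_dual K n E Phi).
Proof.
rewrite psi_gen /tsum big_map mulr_sumr; apply: eq_bigr => p _ /=.
by rewrite elem_general mulrCA -!mulrA.
Qed.

Lemma psi_inj (z z' : dualp (extK E) -> K) : is_tensor z -> is_tensor z' ->
  psi_map z = psi_map z' -> z = z'.
Proof.
move=> [s ->] [s' ->] h; apply: funext => Phi.
by rewrite !tsum_general h.
Qed.

Lemma castN o o' (e : o = o') (v : EO o) : `|ecast o (EO o) e v| = `|v|.
Proof. by case: o' / e. Qed.

Lemma prod_ext_norm (x : forall i, extK E i) :
  \prod_(i < n.+1) `|x i| = `|lastv K n E x| * \prod_(j < n) `|restr K n E x j|.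
Proof.
rewrite (bigD1_ord ord_max) //=; congr (_ * _).
  exact: (esym (castN _ _ (unlift_none ord_max) (x ord_max))).
by apply: eq_bigr => j _; exact: (esym (castN _ _ (liftK ord_max j) _)).
Qed.
End Gen.


Local Open Scope classical_set_scope.

Section AB.
Variable K : numFieldType.
Variable beta : tensor_norm K.
Variables (n : nat) (E : 'I_n.+1 -> normedModType K).
Local Notation EO := (extK_o E).
Local Notation T := (tensB K beta n E).

Definition AB (x : forall i, extK E i) : T :=
  lastv K n.+1 E x *: TelemB K beta n E (restr K n.+1 E x).

Lemma AB_ml : multilinear AB.
Proof.
move=> i; case: (unlift_cases n.+1 i) => [[j ->]|->] w a u v.
  rewrite /AB !restr_dfS !lastv_dfS castD castZ.
  rewrite (TelemB_ml K beta n E j (restr K n.+1 E w)).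
  by rewrite scalerDr !scalerA mulrC.
rewrite /AB !restr_dfN !lastv_dfN castD castZ.
by rewrite scalerDl -scalerA.
Qed.

Lemma AB_cml : cont_multilinear AB.
Proof.
split; first exact: AB_ml.
apply: (ml_continuous K n.+2 (extK E) T AB 1) => //; first exact: AB_ml.
move=> x; rewrite mul1r prod_ext_norm /AB normrZ.
apply: ler_wpM2l => //; exact: TelemB_norm.
Qed.

Lemma A1_AB y : A1 AB y = TelemB K beta n E y.
Proof. by rewrite /A1 /AB lastv_ext restr_ext scale1r. Qed.

End AB.

Section DirII.
Variable K : numFieldType.
Variable beta : tensor_norm K.

Lemma dirII : propB beta -> smooth beta.
Proof.
move=> HB n E; split.
- by move=> z [s ->]; rewrite psi_gen; eexists.
- exact: psi_inj.
- move=> w [s ->]; exists (tsum [seq (p.1, ext_pt p.2 1) | p <- s]); first by eexists.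
  exact: psi_ext.
move=> z [s ->]; apply/le_anti/andP; split.
  have [[_ inv] hb] := HB n E _ (AB K beta n E) (AB_cml K beta n E).
  have lb1 : lin_bound beta (A1 (AB K beta n E)) 1.
    move=> s0; rewrite mul1r -normB_sum le_eqVlt; apply/orP; left; apply/eqP.
    by congr (`|_|); apply: eq_bigr => p _; rewrite A1_AB.
  have inA : in_Lbeta beta (AB K beta n E).
    apply: inv; split; [exact: (A1_cml _ _ _ _ _ (AB_cml K beta n E)) | by exists 1].
  have := (hb inA 1).2 lb1 s; rewrite mul1r; apply: le_trans.
  rewrite psi_gen -normB_sum big_map le_eqVlt; apply/orP; left; apply/eqP.
  by congr (`|_|); apply: eq_bigr => p _ /=; rewrite /AB scalerA.
pose A' := TelemB K beta n.+1 (extK E).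
have [[inv _] hb] := HB n E _ A' (TelemB_cml K beta n.+1 (extK E)).
have lb1 : lin_bound beta A' 1.
  by move=> s0; rewrite mul1r normB_sum.
have inA : in_Lbeta beta A' by split; [exact: TelemB_cml | exists 1].
pose s2 := [seq (p.1 * lastv K n.+1 E p.2, restr K n.+1 E p.2) | p <- s].
have := (hb inA 1).1 lb1 s2; rewrite mul1r -psi_gen.
have -> : \sum_(p <- s2) p.1 *: A1 A' p.2 =
    \sum_(p <- [seq (q.1, ext_pt q.2 1) | q <- s2]) p.1 *: TelemB K beta n.+1 (extK E) p.2.
  by rewrite [RHS]big_map.
rewrite normB_sum.
have -> // : tsum [seq (q.1, ext_pt q.2 1) | q <- s2] = tsum s.
apply: psi_inj; [by eexists | by eexists |].
by rewrite psi_ext psi_gen.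
Qed.
End DirII.

Theorem main_gen (K : numFieldType) (beta : tensor_norm K) : smooth beta <-> propB beta.
Proof. split; [exact: dirI | exact: dirII]. Qed.


Theorem proposition2p4 (R : realType) (b : bool)
    (beta : tensor_norm (scalar_field R b)) :
  smooth beta <-> propB beta.
Proof. exact: main_gen. Qed.
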